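(* Let $E$ be a finite nonempty set, $f:2^E\to\mathbb{N}$ an integral polymatroid rank function, $\vec t\in\mathbb{N}^E$, and let $C_e:\mathbb{N}\times\mathbb{N}\to\mathbb{R}_+$, $e\in E$, be regular functions. Let $D\subseteq\mathbb{N}$ be a set of integers with $\mathbb{B}_f(d)\neq\emptyset$ for all $d\in D$. Then for every $d,d'\in D$ with $|d-d'|=1$ and every optimal solution $\vec x^*(\vec t,d)$ of $P(\vec t,d)$, there is an optimal solution $\vec x^*(\vec t,d')$ of $P(\vec t,d')$ with $\|\vec x^*(\vec t,d)-\vec x^*(\vec t,d')\|\le |d-d'|=1$.
   Context: $\mathbb{N}=\{0,1,2,\dots\}$. A set function $f:2^E\to\mathbb{N}$ is an integral polymatroid rank function if $f(\emptyset)=0$, $f$ is monotone and submodular. For $\vec x\in\mathbb{N}^E$, $x(U)=\sum_{e\in U}x_e$; $\mathbb{B}_f(d)=\{\vec x\in\mathbb{N}^E: x(U)\le f(U)\ \forall U\subseteq E,\ x(E)=d\}$. $P(\vec t,d)$: minimize $\sum_{e\in E}C_e(x_e;t_e)$ subject to $\vec x\in\mathbb{B}_f(d)$. $\|\cdot\|$ is the $L_1$-norm. For $C:\mathbb{N}\times\mathbb{N}\to\mathbb{R}$, $C^-(x;t)=C(x;t)-C(x-1;t)$ for $x\ge1$; $C$ is regular if $C^-(x;t)\le C^-(x;t+1)$ and $C^-(x;t+1)\le C^-(x+1;t)$ for all $x\ge1$, $t\in\mathbb{N}$. *)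

(* Defs.v *)
From mathcomp Require Import all_boot all_order all_algebra.
From mathcomp Require Import reals.
Set Implicit Arguments. Unset Strict Implicit. Unset Printing Implicit Defensive.
Import Order.TTheory GRing.Theory Num.Theory.

Definition polymatroid_rank (E : finType) (f : {set E} -> nat) : Prop :=
  [/\ f set0 = 0%N,
      (forall U V : {set E}, U \subset V -> (f U <= f V)%N) &
      (forall U V : {set E}, (f (U :|: V) + f (U :&: V) <= f U + f V)%N)].

Definition xsum (E : finType) (x : {ffun E -> nat}) (U : {set E}) : nat :=
  (\sum_(e in U) x e)%N.

Definition in_base (E : finType) (f : {set E} -> nat) (d : nat)
    (x : {ffun E -> nat}) : Prop :=
  (forall U : {set E}, (xsum x U <= f U)%N) /\ xsum x setT = d.

Definition Cminus (R : realType) (C : nat -> nat -> R) (x t : nat) : R :=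
  (C x t - C x.-1 t)%R.

Definition regular (R : realType) (C : nat -> nat -> R) : Prop :=
  forall x t : nat, (1 <= x)%N ->
    (Cminus C x t <= Cminus C x t.+1)%R /\
    (Cminus C x t.+1 <= Cminus C x.+1 t)%R.

Definition total_cost (R : realType) (E : finType)
    (C : E -> nat -> nat -> R) (t : {ffun E -> nat}) (x : {ffun E -> nat}) : R :=
  (\sum_(e : E) C e (x e) (t e))%R.

Definition optimal (R : realType) (E : finType) (f : {set E} -> nat)
    (C : E -> nat -> nat -> R) (t : {ffun E -> nat}) (d : nat)
    (x : {ffun E -> nat}) : Prop :=
  in_base f d x /\
  forall y : {ffun E -> nat}, in_base f d y ->
    (total_cost C t x <= total_cost C t y)%R.

Definition l1dist (E : finType) (x y : {ffun E -> nat}) : nat :=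
  (\sum_(e : E) `|x e - y e|)%N.

(* Main.v *)
Require Import Defs.
From mathcomp Require Import all_boot all_order all_algebra.
From mathcomp Require Import reals.
Import Order.TTheory GRing.Theory Num.Theory.
From mathcomp Require Import zify lra.
From Stdlib Require Import Classical.
Set Implicit Arguments. Unset Strict Implicit.

Section Aux.
Variable E : finType.
Implicit Types x y a b : {ffun E -> nat}.

Definition add1 x (e : E) : {ffun E -> nat} := [ffun i => x i + (i == e)].
Definition sub1 x (e : E) : {ffun E -> nat} := [ffun i => x i - (i == e)].
Definition inP (f : {set E} -> nat) x := forall U, xsum x U <= f U.

Lemma xsum_add1 x e U : xsum (add1 x e) U = xsum x U + (e \in U).
Proof.
rewrite /xsum; under eq_bigr do rewrite ffunE.
rewrite big_split /=; congr (_ + _).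
case: (boolP (e \in U)) => He.
  rewrite (bigD1 e) //= eqxx big1 // => i /andP[_ /negbTE ->]; done.
rewrite big1 // => i Hi; apply/eqP; rewrite eqb0; apply: contraNneq He => <-; done.
Qed.

Lemma xsum_sub1 x e U : 0 < x e -> xsum (sub1 x e) U + (e \in U) = xsum x U.
Proof.
move=> xe; rewrite -xsum_add1 /xsum; apply: eq_bigr => i _; rewrite !ffunE.
by case: (eqVneq i e) => [->|] /=; lia.
Qed.

Lemma xsum_mod x A B : xsum x (A :|: B) + xsum x (A :&: B) = xsum x A + xsum x B.
Proof.
rewrite /xsum.
have h1 : \sum_(i in A :|: B) x i = \sum_(i in (A:|:B) :&: B) x i + \sum_(i in (A:|:B):\:B) x i := big_setID _ _.
have h2 : \sum_(i in A) x i = \sum_(i in A :&: B) x i + \sum_(i in A :\: B) x i := big_setID _ _.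
move: h1; rewrite (setIidPr (subsetUr A B)) setDUl setDv setU0 => h1.
lia.
Qed.

Lemma xsum0 x : xsum x set0 = 0.
Proof. by rewrite /xsum big_set0. Qed.

Lemma tight_cup f x A B : polymatroid_rank f -> inP f x -> xsum x A = f A -> xsum x B = f B ->
  xsum x (A :|: B) = f (A :|: B) /\ xsum x (A :&: B) = f (A :&: B).
Proof.
case=> _ _ fsub Px hA hB; have := fsub A B; have := Px (A :|: B); have := Px (A :&: B).
have := xsum_mod x A B; lia.
Qed.

Lemma down_closed f x e : inP f x -> 0 < x e -> inP f (sub1 x e).
Proof. move=> Px xe U; have := xsum_sub1 U xe; have := Px U; lia. Qed.

Lemma exch f a b e : polymatroid_rank f -> inP f a -> inP f b -> a e < b e -> ~ inP f (add1 a e) ->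
  exists u, b u < a u /\ inP f (sub1 (add1 a e) u) /\ inP f (add1 (sub1 b e) u).
Proof.
move=> Hf Pa Pb ltab NP.
have Hf' := Hf; case: Hf' => f0 fmono fsub.
have [U0 HU0] : exists U, f U < xsum (add1 a e) U.
  apply: NNPP => H; apply: NP => U; rewrite leqNgt; apply/negP => h; apply: H; by exists U.
rewrite xsum_add1 in HU0.
have eU0 : e \in U0 by apply: contraT => /negbTE h; move: HU0; rewrite h /=; have := Pa U0; lia.
have tU0 : xsum a U0 = f U0 by move: HU0; rewrite eU0 /=; have := Pa U0; lia.
pose Pt := fun U : {set E} => (e \in U) && (xsum a U == f U).
have PtU0 : Pt U0 by rewrite /Pt eU0 tU0 eqxx.
case: (arg_minnP (fun U : {set E} => #|U|) PtU0) => T /andP[eT /eqP tT] Tmin.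
have Tsub : forall U : {set E}, e \in U -> xsum a U = f U -> T \subset U.
  move=> U eU tU; have [_ hc] := tight_cup Hf Pa tT tU.
  have h := Tmin (T :&: U); rewrite /Pt inE eT eU hc eqxx in h.
  have h' := h erefl.
  apply/setIidPl/eqP; rewrite eqEcard subsetIl; exact: h'.
pose Pw := fun U : {set E} => (e \notin U) && (xsum b U == f U).
have Pw0 : Pw set0 by rewrite /Pw in_set0 xsum0 f0 eqxx.
case: (arg_maxnP (fun U : {set E} => #|U|) Pw0) => W /andP[eW /eqP tW] Wmax.
have Wsup : forall U : {set E}, e \notin U -> xsum b U = f U -> U \subset W.
  move=> U eU tU; have [hc _] := tight_cup Hf Pb tW tU.
  have h := Wmax (W :|: U); rewrite /Pw inE negb_or eW eU hc eqxx in h.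
  have h' := h erefl.
  apply/setUidPl/eqP; rewrite eq_sym eqEcard subsetUl; exact: h'.
apply: NNPP => Hno.
have key : forall u, u \in T -> b u < a u -> u \in W.
  move=> u uT ltu.
  have ue : u != e by apply: contraTneq ltu => ->; rewrite -leqNgt ltnW.
  have P1 : inP f (sub1 (add1 a e) u).
    move=> U.
    have hpos : 0 < add1 a e u by rewrite ffunE; lia.
    have := xsum_sub1 U hpos; rewrite xsum_add1.
    have := Pa U.
    case eU: (e \in U); case uU: (u \in U) => /=; try lia.
    have : xsum a U != f U.
      apply/negP => /eqP tU; have := subsetP (Tsub U eU tU) u uT; rewrite uU; done.
    lia.
  have P2 : ~ inP f (add1 (sub1 b e) u) by move=> P2; apply: Hno; exists u.
  have [U HU] : exists U, f U < xsum (add1 (sub1 b e) u) U.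
    apply: NNPP => H; apply: P2 => U; rewrite leqNgt; apply/negP => h; apply: H; by exists U.
  have hpos : 0 < b e by lia.
  move: HU; rewrite xsum_add1; have := xsum_sub1 U hpos; have := Pb U.
  case uU: (u \in U); case eU: (e \in U) => /=; try lia.
  move=> h1 h2 h3.
  have tU : xsum b U = f U by lia.
  have := subsetP (Wsup U (negbT eU) tU) u; rewrite uU; apply; done.
have lt : xsum a (T :\: W) < xsum b (T :\: W).
  have eTW : e \in T :\: W by rewrite inE eW eT.
  rewrite /xsum (bigD1 e eTW) /= [X in _ < X](bigD1 e eTW) /=.
  rewrite -addSn; apply: leq_add => //.
  apply: leq_sum => i /andP[hi _]; have /setDP[iT iW] : i \in T :\: W by exact: hi.
    rewrite leqNgt; apply/negP => h; move: (key i iT h); rewrite (negbTE iW); done.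
have := fsub T W; have := Pb (T :|: W); have := Pa (T :&: W).
have d1 : xsum a T = xsum a (T :&: W) + xsum a (T :\: W) := big_setID _ _.
have d2 : xsum b (T :|: W) = xsum b ((T :|: W) :&: W) + xsum b ((T :|: W) :\: W) := big_setID _ _.
move: d2; rewrite (setIidPr (subsetUr T W)) setDUl setDv setU0 => d2.
lia.
Qed.


Lemma cminus_mono (R : realType) (C : nat -> nat -> R) t k m :
  regular C -> 1 <= k -> k <= m -> (Cminus C k t <= Cminus C m t)%R.
Proof.
move=> HC k1; elim: m => [|m IH] km; first by lia.
case: (ltngtP k m.+1) => [lt||->] //; last by lia.
have := IH (lt); have [h1 h2] := HC m t (leq_trans k1 (lt)).
move=> h; apply: (le_trans h); exact: le_trans h1 h2.
Qed.

Lemma convex_step (R : realType) (C : nat -> nat -> R) (t p q : nat) :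
  regular C -> p < q -> (C p.+1 t + C q.-1 t <= C p t + C q t)%R.
Proof.
move=> HC ab; have := cminus_mono t HC (ltn0Sn p) ab; rewrite /Cminus /=.
move=> h; lra.
Qed.

Lemma cost_pair (R : realType) (C : E -> nat -> nat -> R) t a b a' b' :
  (forall e, regular (C e)) ->
  (forall i, (a' i = a i /\ b' i = b i) \/ (a i < b i /\ a' i = (a i).+1 /\ b' i = (b i).-1)
          \/ (b i < a i /\ a' i = (a i).-1 /\ b' i = (b i).+1)) ->
  (total_cost C t a' + total_cost C t b' <= total_cost C t a + total_cost C t b)%R.
Proof.
move=> HC H; rewrite /total_cost -!big_split /=; apply: ler_sum => i _.
case: (H i) => [[-> ->]|[[lt [-> ->]]|[lt [-> ->]]]] //.
  exact: convex_step.
have := convex_step (t i) (HC i) lt; lra.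
Qed.

Lemma pair1 a b e : a e < b e -> forall i,
  (add1 a e i = a i /\ sub1 b e i = b i) \/ (a i < b i /\ add1 a e i = (a i).+1 /\ sub1 b e i = (b i).-1)
          \/ (b i < a i /\ add1 a e i = (a i).-1 /\ sub1 b e i = (b i).+1).
Proof.
move=> lt i; rewrite !ffunE; case: (eqVneq i e) => [->|ie] /=.
  by right; left; lia.
by left; lia.
Qed.

Lemma pair2 a b e u : a e < b e -> b u < a u -> forall i,
  (sub1 (add1 a e) u i = a i /\ add1 (sub1 b e) u i = b i)
  \/ (a i < b i /\ sub1 (add1 a e) u i = (a i).+1 /\ add1 (sub1 b e) u i = (b i).-1)
  \/ (b i < a i /\ sub1 (add1 a e) u i = (a i).-1 /\ add1 (sub1 b e) u i = (b i).+1).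
Proof.
move=> lt1 lt2 i.
have ue : u != e by apply: contraTneq lt2 => ->; rewrite -leqNgt ltnW.
rewrite !ffunE; case: (eqVneq i e) => [->|ie] /=.
  rewrite eq_sym (negbTE ue) /=; by right; left; lia.
case: (eqVneq i u) => [->|iu] /=.
  by right; right; lia.
by left; lia.
Qed.

Lemma dist_lt x y y' e : (forall i, `|((x i : int) - (y' i : int))%R|%N <= `|((x i : int) - (y i : int))%R|%N) ->
  `|((x e : int) - (y' e : int))%R|%N < `|((x e : int) - (y e : int))%R|%N -> l1dist x y' < l1dist x y.
Proof.
move=> H He; rewrite /l1dist (bigD1 e) //= [X in _ < X](bigD1 e) //=.
rewrite -addSn; apply: leq_add => //; apply: leq_sum => i _; exact: H.
Qed.

Lemma dist_add1 x e : l1dist x (add1 x e) <= 1.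
Proof.
rewrite /l1dist (bigD1 e) //= big1 => [|i ie]; rewrite !ffunE ?eqxx ?(negbTE ie) /=; lia.
Qed.

Lemma dist_sub1 x e : l1dist x (sub1 x e) <= 1.
Proof.
rewrite /l1dist (bigD1 e) //= big1 => [|i ie]; rewrite !ffunE ?eqxx ?(negbTE ie) /=; lia.
Qed.

Lemma exists_opt (R : realType) f (C : E -> nat -> nat -> R) t d :
  (exists y, in_base f d y) -> exists y, optimal f C t d y.
Proof.
case=> y0 Hy0.
pose emb (z : {ffun E -> 'I_d.+1}) : {ffun E -> nat} := [ffun e => (z e : nat)].
pose Pb := fun z => [forall U, xsum (emb z) U <= f U] && (xsum (emb z) setT == d).
have bnd : forall y, in_base f d y -> forall e, y e < d.+1.
  move=> y [_ <-] e; rewrite ltnS /xsum (bigD1 e) //=; exact: leq_addr.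
have embK : forall y, in_base f d y -> emb [ffun e => inord (y e)] = y.
  move=> y hy; apply/ffunP => e; rewrite !ffunE inordK //; exact: bnd.
have PbE : forall y, in_base f d y -> Pb [ffun e => inord (y e)].
  move=> y hy; rewrite /Pb embK //; case: hy => h1 ->; rewrite eqxx andbT.
  by apply/forallP.
case: (arg_minP (fun z => total_cost C t (emb z)) (PbE _ Hy0)) => zm /andP[/forallP h1 /eqP h2] hmin.
exists (emb zm); split; first by split.
move=> y hy; have := hmin _ (PbE _ hy); rewrite embK //.
Qed.

Lemma step (R : realType) f (C : E -> nat -> nat -> R) t d d' x y :
  polymatroid_rank f -> (forall e, regular (C e)) ->
  optimal f C t d x -> optimal f C t d' y -> (d' = d.+1 \/ d = d'.+1) ->
  (exists x', optimal f C t d' x' /\ l1dist x x' <= 1) \/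
  (exists y', optimal f C t d' y' /\ l1dist x y' < l1dist x y).
Proof.
move=> Hf HC [[Px Sx] Ox] [[Py Sy] Oy] [Hd|Hd].
- have [e lt] : exists e, x e < y e.
    apply: NNPP => H.
    have : xsum y setT <= xsum x setT.
      apply: leq_sum => i _; rewrite leqNgt; apply/negP => h; apply: H; by exists i.
    lia.
  case: (classic (inP f (add1 x e))) => Hadd.
  + left; exists (add1 x e); split; last exact: dist_add1.
    split; first by split => //; rewrite xsum_add1 !in_setT Sx Hd addn1.
    move=> z hz.
    have c := cost_pair t HC (pair1 lt).
    have hpos : 0 < y e by lia.
    have b1 : in_base f d (sub1 y e).
      split; first exact: down_closed.
      have := xsum_sub1 setT hpos; rewrite !in_setT Sy Hd /=; lia.
    have := Ox _ b1; have := Oy _ hz; move: c; lra.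
  + have [u [ltu [P1 P2]]] := exch Hf Px Py lt Hadd.
    right; exists (add1 (sub1 y e) u).
    have hpos : 0 < y e by lia.
    have ue : u != e by apply: contraTneq ltu => ->; rewrite -leqNgt ltnW.
    have hpos2 : 0 < add1 x e u by rewrite ffunE; lia.
    have b1 : in_base f d' (add1 (sub1 y e) u).
      split => //; rewrite xsum_add1; have := xsum_sub1 setT hpos; rewrite !in_setT Sy /=; lia.
    have b2 : in_base f d (sub1 (add1 x e) u).
      split => //; have := xsum_sub1 setT hpos2; rewrite xsum_add1 !in_setT Sx /=; lia.
    split.
      split => // z hz.
      have c := cost_pair t HC (pair2 lt ltu).
      have := Ox _ b2; have := Oy _ hz; move: c; lra.
    apply: (dist_lt (e := e)).
      move=> i; rewrite !ffunE; case: (eqVneq i e) => [->|ie]; rewrite ?eqxx ?(negbTE ue) /=; first lia.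
      case: (eqVneq i u) => [->|iu] /=; lia.
    have eu : (e == u) = false by rewrite eq_sym (negbTE ue).
    rewrite /add1 /sub1 !ffunE eqxx eu /=; lia.
- have [e lt] : exists e, y e < x e.
    apply: NNPP => H.
    have : xsum x setT <= xsum y setT.
      apply: leq_sum => i _; rewrite leqNgt; apply/negP => h; apply: H; by exists i.
    lia.
  case: (classic (inP f (add1 y e))) => Hadd.
  + have hpos : 0 < x e by lia.
    left; exists (sub1 x e); split; last exact: dist_sub1.
    split.
      split; first exact: down_closed.
      have := xsum_sub1 setT hpos; rewrite !in_setT Sx Hd /=; lia.
    move=> z hz.
    have c := cost_pair t HC (pair1 lt).
    have b1 : in_base f d (add1 y e).
      split => //; rewrite xsum_add1 !in_setT Sy Hd addn1 //.
    have := Ox _ b1; have := Oy _ hz; move: c; lra.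
  + have [u [ltu [P1 P2]]] := exch Hf Py Px lt Hadd.
    right; exists (sub1 (add1 y e) u).
    have hpos : 0 < x e by lia.
    have ue : u != e by apply: contraTneq ltu => ->; rewrite -leqNgt ltnW.
    have hpos2 : 0 < add1 y e u by rewrite ffunE; lia.
    have b1 : in_base f d (add1 (sub1 x e) u).
      split => //; rewrite xsum_add1; have := xsum_sub1 setT hpos; rewrite !in_setT Sx /=; lia.
    have b2 : in_base f d' (sub1 (add1 y e) u).
      split => //; have := xsum_sub1 setT hpos2; rewrite xsum_add1 !in_setT Sy /=; lia.
    split.
      split => // z hz.
      have c := cost_pair t HC (pair2 lt ltu).
      have := Ox _ b1; have := Oy _ hz; move: c; lra.
    apply: (dist_lt (e := e)).
      move=> i; rewrite !ffunE; case: (eqVneq i e) => [->|ie]; rewrite ?eqxx ?(negbTE ue) /=; first lia.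
      case: (eqVneq i u) => [->|iu] /=; lia.
    have eu : (e == u) = false by rewrite eq_sym (negbTE ue).
    rewrite /add1 /sub1 !ffunE eqxx eu /=; lia.
Qed.

End Aux.

Theorem theorem3p4 (R : realType) (E : finType) (f : {set E} -> nat)
    (t : {ffun E -> nat}) (C : E -> nat -> nat -> R) (D : nat -> Prop) :
  (0 < #|E|)%N ->
  polymatroid_rank f ->
  (forall e x s, (0 <= C e x s)%R) ->
  (forall e, regular (C e)) ->
  (forall d, D d -> exists x : {ffun E -> nat}, in_base f d x) ->
  forall d d' : nat, D d -> D d' -> `|(d%:Z - d'%:Z)%R|%N = 1%N ->
  forall x : {ffun E -> nat}, optimal f C t d x ->
  exists x' : {ffun E -> nat}, optimal f C t d' x' /\
    (l1dist x x' <= `|(d%:Z - d'%:Z)%R|%N)%N.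
Proof.
move=> _ Hf _ HC HD d d' Dd Dd' Hdd x Ox.
rewrite Hdd.
have Hd : d' = d.+1 \/ d = d'.+1 by lia.
have [y0 Oy0] := exists_opt C t (HD _ Dd').
suff : forall n y, optimal f C t d' y -> l1dist x y <= n ->
  exists x', optimal f C t d' x' /\ l1dist x x' <= 1 by apply; [exact: Oy0 | exact: leqnn].
elim=> [|n IH] y Oy hn.
  case: (step Hf HC Ox Oy Hd) => // [[y' [_ h]]]; lia.
case: (step Hf HC Ox Oy Hd) => // [[y' [Oy' h]]].
apply: (IH y' Oy'); lia.
Qed.
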